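(* Let $x_0, x_1, x_2, \dots \in \mathbb{R}^m$ be a sequence of sparse vectors with supports $\mathcal{N}_t := \operatorname{supp}(x_t)$, observed noise-free as $y_t := A_t x_t$ with $A_t \in \mathbb{R}^{n_t \times m}$. Let $s_t := |\mathcal{N}_t|$, $u_t := |\mathcal{N}_t \setminus \mathcal{N}_{t-1}|$ and $e_t := |\mathcal{N}_{t-1} \setminus \mathcal{N}_t|$. Run the following recursive procedure (dynamic Modified-CS with $\epsilon = 0$, $\alpha = 0$): at $t=0$, let $\hat{x}_0$ be a solution of $\min_b \|b\|_1$ subject to $y_0 = A_0 b$, and set $\hat{\mathcal{N}}_0 := \{i : (\hat{x}_0)_i \neq 0\}$; for each $t > 0$, set $\mathcal{T} := \hat{\mathcal{N}}_{t-1}$, let $\hat{x}_t$ be a solution of $\min_b \|b_{\mathcal{T}^c}\|_1$ subject to $y_t = A_t b$, and set $\hat{\mathcal{N}}_t := \{i : (\hat{x}_t)_i \neq 0\}$. If $\delta_{2 s_0}(A_0) \le 0.2$ and, for all $t > 0$, $\delta_{s_t + u_t + e_t}(A_t) \le 0.2$, then $\hat{x}_t = x_t$ (exact recovery, with the minimizer unique) for all $t \ge 0$.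
   Context: For a vector $v$ and index set $\mathcal{T} \subseteq \{1,\dots,m\}$, $v_{\mathcal{T}}$ is the subvector of entries indexed by $\mathcal{T}$, and $\mathcal{T}^c$ is the complement of $\mathcal{T}$ in $\{1,\dots,m\}$. The restricted isometry constant $\delta_s(A)$ of a matrix $A$ is the smallest real number $\delta$ such that $(1-\delta)\|b\|_2^2 \le \|Ab\|_2^2 \le (1+\delta)\|b\|_2^2$ for all vectors $b$ with at most $s$ nonzero entries. *)

(* Defs.v *)
From HB Require Import structures.
From mathcomp Require Import all_boot all_order all_algebra.
Set Implicit Arguments. Unset Strict Implicit. Unset Printing Implicit Defensive.
Import Order.TTheory GRing.Theory Num.Theory.
Local Open Scope ring_scope.

Definition supp (R : rcfType) (m : nat) (b : 'cV[R]_m) : {set 'I_m} :=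
  [set i | b i 0 != 0].

Definition sqnorm (R : rcfType) (k : nat) (v : 'cV[R]_k) : R :=
  \sum_(i < k) (v i 0) ^+ 2.

Definition l1_off (R : rcfType) (m : nat) (T : {set 'I_m}) (b : 'cV[R]_m) : R :=
  \sum_(i < m | i \notin T) `|b i 0|.

Definition is_l1sol (R : rcfType) (n m : nat) (A : 'M[R]_(n, m)) (y : 'cV[R]_n)
    (T : {set 'I_m}) (b : 'cV[R]_m) : Prop :=
  y = A *m b /\ forall b' : 'cV[R]_m, y = A *m b' -> l1_off T b <= l1_off T b'.

Definition rip_ineq (R : rcfType) (n m : nat) (A : 'M[R]_(n, m)) (s : nat) (d : R) : Prop :=
  forall b : 'cV[R]_m, (#|supp b| <= s)%N ->
    (1 - d) * sqnorm b <= sqnorm (A *m b) /\ sqnorm (A *m b) <= (1 + d) * sqnorm b.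

Definition is_RIC (R : rcfType) (n m : nat) (A : 'M[R]_(n, m)) (s : nat) (d : R) : Prop :=
  rip_ineq A s d /\ forall d', rip_ineq A s d' -> d <= d'.

Definition prevT (R : rcfType) (m : nat) (xhat : nat -> 'cV[R]_m) (t : nat) : {set 'I_m} :=
  if t is t'.+1 then supp (xhat t') else set0.

(* Main.v *)
Require Import Defs.
From HB Require Import structures.
From mathcomp Require Import all_boot all_order all_algebra.
From mathcomp Require Import ring lra zify.
Set Implicit Arguments. Unset Strict Implicit. Unset Printing Implicit Defensive.
Import Order.TTheory GRing.Theory Num.Theory.
Local Open Scope ring_scope.

Definition dotv (R : rcfType) (k : nat) (u v : 'cV[R]_k) : R :=
  \sum_(i < k) u i 0 * v i 0.
Definition nrm (R : rcfType) (k : nat) (u : 'cV[R]_k) : R := Num.sqrt (sqnorm u).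
Definition restr (R : rcfType) (m : nat) (S : {set 'I_m}) (h : 'cV[R]_m) : 'cV[R]_m :=
  \col_(i < m) (if i \in S then h i 0 else 0).
Definition l1 (R : rcfType) (m : nat) (S : {set 'I_m}) (h : 'cV[R]_m) : R :=
  \sum_(i in S) `|h i 0|.

Lemma sqnorm_ge0 (R : rcfType) k (u : 'cV[R]_k) : 0 <= sqnorm u.
Proof. by apply: sumr_ge0 => i _; rewrite sqr_ge0. Qed.

Lemma sqnorm_dot (R : rcfType) k (u : 'cV[R]_k) : sqnorm u = dotv u u.
Proof. by apply: eq_bigr => i _; rewrite expr2. Qed.

Lemma dotC (R : rcfType) k (u v : 'cV[R]_k) : dotv u v = dotv v u.
Proof. by apply: eq_bigr => i _; rewrite mulrC. Qed.

Lemma dotDl (R : rcfType) k (u v w : 'cV[R]_k) : dotv (u + v) w = dotv u w + dotv v w.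
Proof. by rewrite /dotv -big_split; apply: eq_bigr => i _; rewrite !mxE mulrDl. Qed.

Lemma dotZl (R : rcfType) k a (u w : 'cV[R]_k) : dotv (a *: u) w = a * dotv u w.
Proof. by rewrite /dotv mulr_sumr; apply: eq_bigr => i _; rewrite !mxE mulrA. Qed.

Lemma dotNl (R : rcfType) k (u w : 'cV[R]_k) : dotv (- u) w = - dotv u w.
Proof. by rewrite -scaleN1r dotZl mulN1r. Qed.

Lemma dotDr (R : rcfType) k (u v w : 'cV[R]_k) : dotv w (u + v) = dotv w u + dotv w v.
Proof. by rewrite !(dotC w) dotDl. Qed.

Lemma dotZr (R : rcfType) k a (u w : 'cV[R]_k) : dotv w (a *: u) = a * dotv w u.
Proof. by rewrite !(dotC w) dotZl. Qed.

Lemma dotNr (R : rcfType) k (u w : 'cV[R]_k) : dotv w (- u) = - dotv w u.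
Proof. by rewrite !(dotC w) dotNl. Qed.

Lemma dot0r (R : rcfType) k (w : 'cV[R]_k) : dotv w 0 = 0.
Proof. by rewrite /dotv big1 // => i _; rewrite mxE mulr0. Qed.

Lemma sqnorm_eq0 (R : rcfType) k (u : 'cV[R]_k) : sqnorm u = 0 -> u = 0.
Proof.
move=> /eqP; rewrite psumr_eq0 => [/allP H|i _]; last exact: sqr_ge0.
apply/matrixP => i j; rewrite ord1 mxE.
have := H i (mem_index_enum _); rewrite /= sqrf_eq0 => /eqP //.
Qed.

Lemma nrm_ge0 (R : rcfType) k (u : 'cV[R]_k) : 0 <= nrm u.
Proof. exact: sqrtr_ge0. Qed.

Lemma nrm_sq (R : rcfType) k (u : 'cV[R]_k) : nrm u ^+ 2 = sqnorm u.
Proof. by rewrite sqr_sqrtr // sqnorm_ge0. Qed.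

Lemma restrE (R : rcfType) m S (h : 'cV[R]_m) i : restr S h i 0 = if i \in S then h i 0 else 0.
Proof. by rewrite mxE. Qed.

Lemma restrU (R : rcfType) m (S1 S2 : {set 'I_m}) (h : 'cV[R]_m) :
  [disjoint S1 & S2] -> restr (S1 :|: S2) h = restr S1 h + restr S2 h.
Proof.
move=> dis; apply/matrixP => i j; rewrite ord1 !mxE in_setU.
case: (boolP (i \in S1)) => H1 /=; last by rewrite add0r.
by rewrite (disjointFr dis H1) addr0.
Qed.

Lemma restrT (R : rcfType) m (h : 'cV[R]_m) : restr setT h = h.
Proof. by apply/matrixP => i j; rewrite ord1 !mxE in_setT. Qed.

Lemma supp_restr (R : rcfType) m S (h : 'cV[R]_m) : supp (restr S h) \subset S.
Proof.
apply/subsetP => i; rewrite inE restrE; case: (i \in S) => //; by rewrite eqxx.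
Qed.

Lemma sqnorm_restr (R : rcfType) m S (h : 'cV[R]_m) :
  sqnorm (restr S h) = \sum_(i in S) h i 0 ^+ 2.
Proof.
rewrite /sqnorm (bigID (mem S)) /= [X in _ + X]big1 ?addr0.
  by apply: eq_bigr => i Hi; rewrite restrE Hi.
by move=> i /negPf Hi; rewrite restrE Hi expr0n.
Qed.


Lemma dot_expand (R : rcfType) k (p q : R) (x y : 'cV[R]_k) :
  sqnorm (p *: x + q *: y) = p ^+ 2 * sqnorm x + 2 * p * q * dotv x y + q ^+ 2 * sqnorm y.
Proof.
rewrite !sqnorm_dot !(dotDl, dotDr, dotZl, dotZr) (dotC y x); ring.
Qed.

Lemma supp_comb (R : rcfType) m (p q : R) (x y : 'cV[R]_m) (U V : {set 'I_m}) :
  supp x \subset U -> supp y \subset V -> supp (p *: x + q *: y) \subset U :|: V.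
Proof.
move=> /subsetP sx /subsetP sy; apply/subsetP => i; rewrite !inE !mxE => H.
apply/orP; case: (boolP (x i 0 == 0)) => [/eqP x0|xn].
  right; apply: sy; rewrite inE; apply: contraNneq H => ->; by rewrite x0 !mulr0 addr0.
by left; apply: sx; rewrite inE.
Qed.

Lemma dot_disj (R : rcfType) m (x y : 'cV[R]_m) (U V : {set 'I_m}) :
  supp x \subset U -> supp y \subset V -> [disjoint U & V] -> dotv x y = 0.
Proof.
move=> /subsetP sx /subsetP sy dis; rewrite /dotv big1 // => i _.
case: (boolP (x i 0 == 0)) => [/eqP ->|xn]; first by rewrite mul0r.
have iU : i \in U by apply: sx; rewrite inE.
case: (boolP (y i 0 == 0)) => [/eqP ->|yn]; first by rewrite mulr0.
have iV : i \in V by apply: sy; rewrite inE.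
by rewrite (disjointFr dis iU) in iV.
Qed.

Lemma polar (R : rcfType) n m (A : 'M[R]_(n, m)) k d (u v : 'cV[R]_m) (U V : {set 'I_m}) :
  0 <= d -> rip_ineq A k d -> supp u \subset U -> supp v \subset V ->
  [disjoint U & V] -> (#|U :|: V| <= k)%N ->
  `|dotv (A *m u) (A *m v)| <= d * (nrm u * nrm v).
Proof.
move=> d0 rip su sv dis card.
have duv := dot_disj su sv dis.
set a := nrm u; set b := nrm v.
have ha : a ^+ 2 = sqnorm u by rewrite nrm_sq.
have hb : b ^+ 2 = sqnorm v by rewrite nrm_sq.
have a0 : 0 <= a by apply: nrm_ge0.
have b0 : 0 <= b by apply: nrm_ge0.
have [a0e|an0] := eqVneq a 0.
  have : u = 0 by apply: sqnorm_eq0; rewrite -ha a0e expr0n.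
  by move=> ->; rewrite a0e mulmx0 dotC dot0r normr0 mul0r mulr0.
have [b0e|bn0] := eqVneq b 0.
  have : v = 0 by apply: sqnorm_eq0; rewrite -hb b0e expr0n.
  by move=> ->; rewrite b0e mulmx0 dot0r normr0 !mulr0.
have ab0 : 0 < a * b by rewrite mulr_gt0 // lt0r ?an0 ?bn0.
have key : forall s : R, s = 1 \/ s = -1 ->
   s * (a * b * dotv (A *m u) (A *m v)) <= d * (a * b) ^+ 2.
  move=> s hs.
  have sup : forall z, supp (b *: u + z *: v) \subset U :|: V by move=> z; exact: supp_comb.
  have c1 := rip _ (leq_trans (subset_leq_card (sup a)) card).
  have c2 := rip _ (leq_trans (subset_leq_card (sup (- a))) card).
  rewrite !mulmxDr -!scalemxAr !dot_expand duv -ha -hb in c1 c2.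
  have e1 : sqnorm (A *m u) = dotv (A *m u) (A *m u) by rewrite sqnorm_dot.
  case: c1 => c1l c1u; case: c2 => c2l c2u.
  case: hs => ->; nra.
rewrite ler_norml; apply/andP; split.
  have := key (-1) (or_intror erefl).
  move=> H; have : a * b * (- d * (a * b)) <= a * b * dotv (A *m u) (A *m v) by nra.
  by rewrite ler_pM2l // mulNr.
have := key 1 (or_introl erefl).
move=> H; have : a * b * dotv (A *m u) (A *m v) <= a * b * (d * (a * b)) by nra.
by rewrite ler_pM2l.
Qed.


Lemma top_sel (R : rcfType) m (h : 'cV[R]_m) (S : {set 'I_m}) q :
  (q <= #|S|)%N -> exists C : {set 'I_m},
   [/\ C \subset S, #|C| = q & forall i j, i \in C -> j \in S :\: C -> `|h j 0| <= `|h i 0|].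
Proof.
elim: q => [|q IH] Hq.
  by exists set0; split; rewrite ?sub0set ?cards0 // => i j; rewrite inE.
have [C [sC cC top]] := IH (ltnW Hq).
have : (0 < #|S :\: C|)%N by rewrite cardsD (setIidPr sC); lia.
case/card_gt0P => j0 j0in.
set j := Order.arg_max j0 (fun k => k \in S :\: C) (fun k => `|h k 0|).
have [jin jmax] : j \in S :\: C /\ forall k, k \in S :\: C -> `|h k 0| <= `|h j 0|.
  by rewrite /j; case: arg_maxP => // i iin imax; split => // k kin; apply: imax.
have jC : j \notin C by move: jin; rewrite inE => /andP[].
exists (j |: C); split.
- by rewrite subUset sub1set sC andbT; move: jin; rewrite inE => /andP[].
- by rewrite cardsU1 jC cC.
- move=> i k; rewrite !inE => /orP[/eqP ->|iC] /andP[/norP[kj kC] kS].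
    by apply: jmax; rewrite inE kC.
  by apply: top => //; rewrite inE kC.
Qed.

Lemma restr_split (R : rcfType) m (C S : {set 'I_m}) (h : 'cV[R]_m) :
  C \subset S -> restr S h = restr C h + restr (S :\: C) h.
Proof.
move=> /subsetP sC; apply/matrixP => i j; rewrite ord1 !mxE inE.
case: (boolP (i \in C)) => iC /=; first by rewrite (sC _ iC) addr0.
by rewrite add0r.
Qed.

Lemma l1_split (R : rcfType) m (C S : {set 'I_m}) (h : 'cV[R]_m) :
  C \subset S -> l1 S h = l1 C h + l1 (S :\: C) h.
Proof. by move=> sC; rewrite /l1 (big_setID C) (setIidPr sC). Qed.

Lemma l1_ge0 (R : rcfType) m (S : {set 'I_m}) (h : 'cV[R]_m) : 0 <= l1 S h.
Proof. by apply: sumr_ge0 => i _; apply: normr_ge0. Qed.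

Lemma small_blk (R : rcfType) n m (A : 'M[R]_(n, m)) k d q (r c : R) (w h : 'cV[R]_m)
  (W S : {set 'I_m}) :
  0 <= d -> rip_ineq A k d -> r ^+ 2 = q%:R -> 0 <= r ->
  supp w \subset W -> [disjoint W & S] -> (#|W| + q <= k)%N -> (#|S| <= q)%N ->
  0 <= c -> (forall i, i \in S -> `|h i 0| <= c) ->
  r * `|dotv (A *m w) (A *m restr S h)| <= d * nrm w * (q%:R * c).
Proof.
move=> d0 rip hr r0 sw dis cW cS c0 hc.
have cU : (#|W :|: S| <= k)%N.
  by have [le _] := leq_card_setU W S; lia.
have P := polar d0 rip sw (supp_restr S h) dis cU.
have sq : sqnorm (restr S h) <= q%:R * c ^+ 2.
  rewrite sqnorm_restr.
  apply: (@le_trans _ _ (\sum_(i in S) c ^+ 2)).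
    apply: ler_sum => i iS; rewrite -(real_normK (num_real (h i 0))).
    have := hc i iS; have := normr_ge0 (h i 0); nra.
  rewrite sumr_const -mulr_natl.
  have : (#|S|%:R : R) <= q%:R by rewrite ler_nat.
  have := sqr_ge0 c; nra.
have nS := nrm_sq (restr S h); have nS0 := nrm_ge0 (restr S h).
have nw0 := nrm_ge0 w.
have rn : r * nrm (restr S h) <= q%:R * c.
  have q0 : 0 <= (q%:R : R) by rewrite ler0n.
  have X : (r * nrm (restr S h)) ^+ 2 <= (q%:R * c) ^+ 2.
    rewrite !exprMn hr nS expr2 -mulrA; apply: ler_wpM2l => //.
  have Y : 0 <= r * nrm (restr S h) by apply: mulr_ge0.
  have Z : 0 <= q%:R * c by apply: mulr_ge0.
  nra.
have dn := normr_ge0 (dotv (A *m w) (A *m restr S h)).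
have E1 := ler_wpM2l r0 P.
have dw : 0 <= d * nrm w by apply: mulr_ge0.
have E2 := ler_wpM2l dw rn.
apply: (le_trans E1); apply: le_trans E2; rewrite le_eqVlt; apply/orP; left; apply/eqP; ring.
Qed.


Lemma tail (R : rcfType) n m (A : 'M[R]_(n, m)) k d q (r : R) (w h : 'cV[R]_m)
  (W : {set 'I_m}) : (0 < q)%N ->
  0 <= d -> rip_ineq A k d -> r ^+ 2 = q%:R -> 0 <= r ->
  supp w \subset W -> (#|W| + q <= k)%N ->
  forall (S : {set 'I_m}) (c : R), [disjoint W & S] ->
  0 <= c -> (forall i, i \in S -> `|h i 0| <= c) ->
  r * `|dotv (A *m w) (A *m restr S h)| <= d * nrm w * (q%:R * c + l1 S h).
Proof.
move=> q0 d0 rip hr r0 sw cW S.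
have [N] := ubnP #|S|; elim: N S => // N IH S ltS c dis c0 hc.
have dw : 0 <= d * nrm w by apply: mulr_ge0 => //; apply: nrm_ge0.
case: (leqP #|S| q) => cS.
  have H := small_blk d0 rip hr r0 sw dis cW cS c0 hc.
  apply: (le_trans H); apply: ler_wpM2l => //; rewrite lerDl; exact: l1_ge0.
have [C [sC cC top]] := top_sel h (ltnW cS).
rewrite (restr_split h sC) mulmxDr dotDr (l1_split h sC).
have disC : [disjoint W & C] by apply: disjointWr dis.
have disS' : [disjoint W & S :\: C] by apply: disjointWr dis; apply: subsetDl.
have hC : forall i, i \in C -> `|h i 0| <= c by move=> i iC; apply: hc; apply: (subsetP sC).
have dC := small_blk d0 rip hr r0 sw disC cW (eq_leq cC) c0 hC.
have qR : 0 < (q%:R : R) by rewrite ltr0n.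
set c' := l1 C h / q%:R.
have c'0 : 0 <= c' by apply: divr_ge0; [apply: l1_ge0 | apply: ltW].
have hc' : forall j, j \in S :\: C -> `|h j 0| <= c'.
  move=> j jS; rewrite ler_pdivlMr // -cC mulr_natr -sumr_const.
  by apply: ler_sum => i iC; apply: top.
have ltS' : (#|S :\: C| < N)%N by rewrite cardsD (setIidPr sC) cC; lia.
have IH' := IH _ ltS' c' disS' c'0 hc'.
have qc : q%:R * c' = l1 C h by rewrite mulrC divfK // gt_eqF.
rewrite qc in IH'.
apply: (le_trans (ler_wpM2l r0 (ler_normD _ _))).
rewrite mulrDr mulrDr mulrDr; apply: lerD => //.
by rewrite -mulrDr.
Qed.


Lemma cs (R : rcfType) m (S : {set 'I_m}) (f : 'I_m -> R) :
  (\sum_(i in S) f i) ^+ 2 <= #|S|%:R * \sum_(i in S) f i ^+ 2.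
Proof.
have E : (\sum_(i in S) f i) ^+ 2 = \sum_(i in S) \sum_(j in S) f i * f j.
  by rewrite expr2 mulr_suml; apply: eq_bigr => i _; rewrite mulr_sumr.
rewrite E -(@ler_pM2l _ 2) ?ltr0n // [X in X <= _]mulr_sumr.
apply: (@le_trans _ _ (\sum_(i in S) \sum_(j in S) (f i ^+ 2 + f j ^+ 2))).
  apply: ler_sum => i _; rewrite mulr_sumr; apply: ler_sum => j _.
  rewrite -subr_ge0; have -> : f i ^+ 2 + f j ^+ 2 - 2 * (f i * f j) = (f i - f j) ^+ 2 by ring.
  exact: sqr_ge0.
rewrite (eq_bigr (fun i => f i ^+ 2 *+ #|S| + \sum_(j in S) f j ^+ 2)); last first.
  by move=> i _; rewrite big_split /= sumr_const.
by rewrite big_split /= sumr_const sumrMnl mulr2n mulr_natl mulrDl mul1r.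
Qed.

Lemma l1_cs (R : rcfType) m (S : {set 'I_m}) (h : 'cV[R]_m) (r : R) :
  r ^+ 2 = #|S|%:R -> 0 <= r -> l1 S h <= r * nrm (restr S h).
Proof.
move=> hr r0.
have C := cs S (fun i => `|h i 0|).
have E : \sum_(i in S) `|h i 0| ^+ 2 = sqnorm (restr S h).
  by rewrite sqnorm_restr; apply: eq_bigr => i _; rewrite real_normK // num_real.
rewrite E -hr -(nrm_sq (restr S h)) -exprMn in C.
have := l1_ge0 S h; have := nrm_ge0 (restr S h) => n0 l0.
have rn : 0 <= r * nrm (restr S h) by apply: mulr_ge0.
rewrite /l1; move: C l0 rn; rewrite /l1; set x := \sum_(i in S) _; set y := r * _.
move=> C l0 rn; by rewrite -ler_sqr ?nnegrE.
Qed.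

Lemma sqnorm_restr_sub (R : rcfType) m (S1 S2 : {set 'I_m}) (h : 'cV[R]_m) :
  S1 \subset S2 -> nrm (restr S1 h) <= nrm (restr S2 h).
Proof.
move=> sub; rewrite /nrm ler_sqrt ?sqnorm_ge0 // !sqnorm_restr (big_setID S1 (A := S2)).
rewrite (setIidPr sub) lerDl; apply: sumr_ge0 => i _; exact: sqr_ge0.
Qed.


Lemma disj_of m (A B : {set 'I_m}) : (forall x, x \in A -> x \notin B) -> [disjoint A & B].
Proof. by move=> H; rewrite disjoint_subset; apply/subsetP => x xA; rewrite inE /=; apply: H. Qed.

Lemma sqnorm0 (R : rcfType) k : sqnorm (0 : 'cV[R]_k) = 0.
Proof. by rewrite /sqnorm big1 // => i _; rewrite mxE expr0n. Qed.

Lemma fifth (R : rcfType) : 0 <= (1 / 5%:R : R) /\ (1 / 5%:R : R) * 5%:R = 1.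
Proof. split; first by rewrite divr_ge0 ?ler0n. by rewrite mul1r mulVf // pnatr_eq0. Qed.

Lemma eqle (R : rcfType) (x y : R) : x = y -> x <= y.
Proof. by move=> ->. Qed.

Lemma nsp (R : rcfType) n m (A : 'M[R]_(n, m)) k (T N : {set 'I_m}) (h : 'cV[R]_m) :
  rip_ineq A k (1 / 5%:R) -> (#|T| + 2 * #|N :\: T| <= k)%N -> A *m h = 0 -> h != 0 ->
  l1 (N :\: T) h < l1 (~: (T :|: N)) h.
Proof.
move=> rip hk Ah hn0.
set D := N :\: T; set S0 := T :|: N; set U := ~: S0.
set q := #|D|.
have hk' : (#|T| + 2 * q <= k)%N by exact: hk.
set d : R := 1 / 5%:R.
have [d0 d5] : 0 <= d /\ d * 5%:R = 1 by apply: fifth.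
have cS0 : (#|S0| <= #|T| + q)%N.
  rewrite /S0 /q /D cardsU cardsD setIC.
  have := subset_leq_card (subsetIr T N); lia.
have DS0 : D \subset S0 by rewrite /D /S0; apply/subsetP => i; rewrite !inE => /andP[_ ->]; rewrite orbT.
set L := l1 U h.
have L0 : 0 < L.
  rewrite lt_def l1_ge0 andbT; apply/eqP => L0.
  have hU : forall i, i \in U -> h i 0 = 0.
    move=> i iU; apply/eqP/normr0P; move: L0; rewrite /L /l1 => /eqP.
    rewrite psumr_eq0 => [/allP H|]; last by move=> j _; apply: normr_ge0.
    by have := H i (mem_index_enum _); rewrite iU /= => /eqP.
  have sh : supp h \subset S0.
    apply/subsetP => i; rewrite inE => hi; apply: contraR hi => iS.
    by rewrite hU ?eqxx // inE.
  have cS0k : (#|S0| <= k)%N. by lia.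
  have [lo _] := rip h (leq_trans (subset_leq_card sh) cS0k).
  rewrite Ah sqnorm0 in lo.
  have := sqnorm_ge0 h => s0.
  have d1 : 0 < 1 - d by move: d5; rewrite /d; clear; lra.
  have : sqnorm h = 0.
    apply/eqP; rewrite eq_le s0 andbT.
    by rewrite -(pmulr_rle0 _ d1).
  by move/sqnorm_eq0 => h0; rewrite h0 eqxx in hn0.
have [q0|qpos] := posnP q.
  have -> : D = set0 by apply: cards0_eq.
  by rewrite /l1 big_set0.
set r : R := Num.sqrt q%:R.
have hr : r ^+ 2 = q%:R by rewrite sqr_sqrtr // ler0n.
have r0 : 0 <= r by apply: sqrtr_ge0.
have qR : 0 < (q%:R : R) by rewrite ltr0n.
have [C [sC cC top]] : exists C : {set 'I_m}, [/\ C \subset U, (#|C| <= q)%N &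
      forall j, j \in U :\: C -> `|h j 0| * q%:R <= l1 C h].
  case: (leqP q #|U|) => hq.
    have [C [sC cC top]] := top_sel h hq.
    exists C; split => //; first by rewrite cC.
    move=> j jS; rewrite -cC mulr_natr -sumr_const.
    by apply: ler_sum => i iC; apply: top.
  exists U; split => //; first exact: ltnW.
  by move=> j; rewrite setDv inE.
set c := l1 C h / q%:R.
have c0 : 0 <= c by apply: divr_ge0; [apply: l1_ge0 | apply: ltW].
have hc : forall j, j \in U :\: C -> `|h j 0| <= c by move=> j jS; rewrite ler_pdivlMr // top.
have qc : q%:R * c = l1 C h by rewrite mulrC divfK // gt_eqF.
set S' := U :\: C.
set u0 := restr S0 h; set u1 := restr C h; set v := restr S' h.
have hsplit : h = u0 + u1 + v.
  rewrite -{1}(restrT h) (restr_split h (subsetT S0)) setTD -/U (restr_split h sC).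
  by rewrite addrA.
have Ahv : A *m u0 + A *m u1 = - (A *m v).
  apply/eqP; rewrite -addr_eq0 -!mulmxDr -hsplit Ah //.
have disS0S' : [disjoint S0 & S'].
  by apply: disj_of => x xS0; rewrite in_setD in_setC xS0 andbF.
have disCS' : [disjoint C & S'].
  by apply: disj_of => x xC; rewrite in_setD xC.
have disS0C : [disjoint S0 & C].
  apply: disj_of => x xS0; apply: contraL xS0 => xC.
  by have := subsetP sC x xC; rewrite in_setC.
have lS : l1 C h + l1 S' h = L by rewrite /L (l1_split h sC).
have k0 : (#|S0| + q <= k)%N by clear -cS0 hk'; lia.
have k1 : (#|C| + q <= k)%N by clear -cC hk'; lia.
have T0 := tail qpos d0 rip hr r0 (supp_restr S0 h) k0 disS0S' c0 hc.
have T1 := tail qpos d0 rip hr r0 (supp_restr C h) k1 disCS' c0 hc.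
rewrite qc lS -/u0 -/v in T0; rewrite qc lS -/u1 -/v in T1.
have e01 : sqnorm (u0 + u1) = sqnorm u0 + sqnorm u1.
  have := dot_expand 1 1 u0 u1; rewrite !scale1r (dot_disj (supp_restr S0 h) (supp_restr C h) disS0C).
  by move=> ->; ring.
set a := nrm (u0 + u1).
have a0 : 0 <= a by apply: nrm_ge0.
have n0a : nrm u0 <= a by rewrite /a /nrm ler_sqrt ?sqnorm_ge0 // e01 lerDl sqnorm_ge0.
have n1a : nrm u1 <= a by rewrite /a /nrm ler_sqrt ?sqnorm_ge0 // e01 lerDr sqnorm_ge0.
have su : supp (u0 + u1) \subset S0 :|: C.
  by have := supp_comb 1 1 (supp_restr S0 h) (supp_restr C h); rewrite !scale1r.
have cU : (#|S0 :|: C| <= k)%N by have [le _] := leq_card_setU S0 C; clear -le cS0 cC hk'; lia.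
have [lo _] := rip _ (leq_trans (subset_leq_card su) cU).
have eA : sqnorm (A *m (u0 + u1)) = - (dotv (A *m u0) (A *m v) + dotv (A *m u1) (A *m v)).
  rewrite sqnorm_dot mulmxDr {2}Ahv dotNr dotDl //.
have ha : a ^+ 2 = sqnorm (u0 + u1) by rewrite nrm_sq.
rewrite eA -ha in lo.
set X0 := dotv (A *m u0) (A *m v) in T0 lo; set X1 := dotv (A *m u1) (A *m v) in T1 lo.
have nX : - (X0 + X1) <= `|X0| + `|X1|.
  by rewrite opprD; apply: lerD; rewrite -normrN ler_norm.
have hl := le_trans lo nX.
have nu0 := nrm_ge0 u0; have nu1 := nrm_ge0 u1.
have key : r * ((1 - d) * a ^+ 2) <= d * (2 * a) * L.
  apply: (le_trans (ler_wpM2l r0 hl)); rewrite mulrDr.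
  apply: (le_trans (lerD T0 T1)).
  have : d * nrm u0 * L + d * nrm u1 * L <= d * a * L + d * a * L.
    apply: lerD; apply: ler_wpM2r; try exact: ltW; apply: ler_wpM2l => //.
  move=> H; apply: (le_trans H); apply: eqle; ring.
have CS' : l1 D h <= r * a.
  apply: (le_trans (l1_cs (S := D) h hr r0)); apply: ler_wpM2l => //.
  exact: le_trans (sqnorm_restr_sub h DS0) n0a.
have ra : 0 <= r * a by apply: mulr_ge0.
have [a00|apos] := eqVneq a 0.
  by apply: (le_lt_trans CS'); rewrite a00 mulr0.
have ap : 0 < a by rewrite lt_def apos a0.
have : 2 * (r * a) <= L.
  have k2 : a * (r * a * (1 - d)) <= a * (d * 2 * L).
    have E : a * (r * a * (1 - d)) = r * ((1 - d) * a ^+ 2) by ring.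
    rewrite E; apply: (le_trans key); apply: eqle; ring.
  rewrite ler_pM2l // in k2.
  move: k2; rewrite /d; set y := r * a; clear -L0; lra.
move=> H; apply: (le_lt_trans CS'); move: H L0; set y := r * a; clear; lra.
Qed.


Lemma l1_off_split (R : rcfType) m (T N : {set 'I_m}) (z : 'cV[R]_m) :
  l1_off T z = l1 (N :\: T) z + l1 (~: (T :|: N)) z.
Proof.
have -> : l1_off T z = l1 (~: T) z by apply: eq_bigl => i; rewrite inE.
have sub : N :\: T \subset ~: T by apply/subsetP => i; rewrite !inE => /andP[->].
rewrite (l1_split z sub); congr (_ + _); apply: eq_bigl => i.
by rewrite !inE; case: (i \in T); case: (i \in N).
Qed.

Lemma recover (R : rcfType) n m (A : 'M[R]_(n, m)) k (T : {set 'I_m}) (x b : 'cV[R]_m) :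
  rip_ineq A k (1 / 5%:R) -> (#|T| + 2 * #|supp x :\: T| <= k)%N ->
  A *m x = A *m b -> b != x -> l1_off T x < l1_off T b.
Proof.
move=> rip hk eq bx.
set h := b - x.
have Ah : A *m h = 0 by rewrite mulmxBr eq subrr.
have hn0 : h != 0 by rewrite subr_eq0.
have H := nsp rip hk Ah hn0.
rewrite !(l1_off_split T (supp x)).
have xU : forall i, i \in ~: (T :|: supp x) -> x i 0 = 0.
  by move=> i; rewrite !inE negb_or => /andP[_]; rewrite negbK => /eqP.
have -> : l1 (~: (T :|: supp x)) x = 0.
  by rewrite /l1 big1 // => i iU; rewrite xU ?normr0.
have -> : l1 (~: (T :|: supp x)) b = l1 (~: (T :|: supp x)) h.
  by apply: eq_bigr => i iU; rewrite /h !mxE xU // subr0.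
have hD : l1 (supp x :\: T) x - l1 (supp x :\: T) h <= l1 (supp x :\: T) b.
  rewrite /l1 -sumrB; apply: ler_sum => i _.
  have -> : x i 0 = b i 0 - h i 0 by rewrite /h !mxE opprB addrC subrK.
  rewrite lerBlDr; exact: ler_normB.
move: H hD; set a := l1 _ x; set c := l1 _ h; set e := l1 _ h; set f := l1 _ b.
move=> H hD; rewrite addr0; lra.
Qed.

Lemma recover_all (R : rcfType) n m (A : 'M[R]_(n, m)) k (T : {set 'I_m}) (x : 'cV[R]_m) :
  rip_ineq A k (1 / 5%:R) -> (#|T| + 2 * #|supp x :\: T| <= k)%N ->
  is_l1sol A (A *m x) T x /\ (forall b, is_l1sol A (A *m x) T b -> b = x).
Proof.
move=> rip hk; split.
  split => // b' eq; have [->|ne] := eqVneq b' x; first by [].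
  exact: ltW (recover rip hk eq ne).
move=> b [eq opt]; apply/eqP; apply/negPn/negP => ne.
have := recover rip hk eq ne; have := opt x erefl.
by move=> H1 H2; have := le_lt_trans H1 H2; rewrite ltxx.
Qed.

Lemma ric_rip (R : rcfType) n m (A : 'M[R]_(n, m)) s d :
  is_RIC A s d -> d <= 1 / 5%:R -> rip_ineq A s (1 / 5%:R).
Proof.
move=> [rip _] hd b hb; have [l u] := rip b hb; have s0 := sqnorm_ge0 b.
split.
  apply: le_trans l; apply: ler_wpM2r => //; lra.
apply: (le_trans u); apply: ler_wpM2r => //; lra.
Qed.

Unset Implicit Arguments.
Set Strict Implicit.

Theorem mainTheorem1 (R : rcfType) (m : nat) (n : nat -> nat)
    (A : forall t : nat, 'M[R]_(n t, m)) (x : nat -> 'cV[R]_m)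
    (xhat : nat -> 'cV[R]_m) :
  (* RIP hypotheses *)
  (exists d : R, is_RIC (A 0%N) (2 * #|supp (x 0%N)|)%N d /\ d <= 1 / 5%:R) ->
  (forall t : nat, (0 < t)%N ->
     exists d : R,
       is_RIC (A t) (#|supp (x t)| + #|supp (x t) :\: supp (x t.-1)|
                     + #|supp (x t.-1) :\: supp (x t)|)%N d
       /\ d <= 1 / 5%:R) ->
  (* xhat is produced by the dynamic Modified-CS recursion (T = set0 at t = 0) *)
  (forall t : nat, is_l1sol (A t) (A t *m x t) (prevT xhat t) (xhat t)) ->
  forall t : nat,
    xhat t = x t /\
    is_l1sol (A t) (A t *m x t) (prevT xhat t) (x t) /\
    (forall b : 'cV[R]_m, is_l1sol (A t) (A t *m x t) (prevT xhat t) b -> b = x t).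
Proof.
move=> H0 Ht Hsol.
have step : forall t, (t = 0%N \/ exists t', t = t'.+1 /\ xhat t' = x t') ->
    is_l1sol (A t) (A t *m x t) (prevT xhat t) (x t) /\
    (forall b : 'cV[R]_m, is_l1sol (A t) (A t *m x t) (prevT xhat t) b -> b = x t).
  move=> t [->|[t' [-> IH]]].
    have [d [ric hd]] := H0.
    apply: recover_all (ric_rip ric hd) _.
    by rewrite /= cards0 setD0.
  have [d [ric hd]] := Ht t'.+1 isT.
  apply: recover_all (ric_rip ric hd) _.
  rewrite /= IH !cardsD setIC.
  set P := supp (x t'); set N := supp (x t'.+1).
  have := subset_leq_card (subsetIl P N); have := subset_leq_card (subsetIr P N).
  move: (#|P :&: N|) (#|P|) (#|N|) => a b c; clear; lia.
have all : forall t, xhat t = x t.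
  elim => [|t IH].
    by have [_ U] := step 0%N (or_introl erefl); apply: U.
  have [_ U] := step t.+1 (or_intror (ex_intro _ t (conj erefl IH))); exact: U.
move=> t; split; first exact: all.
have [t0|[t' ->]] : t = 0%N \/ exists t', t = t'.+1 by case: t => [|t']; [left|right; exists t'].
  by rewrite t0; apply: step; left.
by apply: step; right; exists t'; split.
Qed.
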